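(* Let $\nu\ge2$ and $2\le n,m\le\nu$ be fixed integers and let $M\ge1$. Let $$P_1(Z)=\sum_{i=0}^{n-1}a_iZ^i\qquad\text{and}\qquad P_2(Z)=\sum_{i=0}^{m-1}b_iZ^i$$ be polynomials with complex coefficients such that $a_{n-1},b_{m-1}\ne0$ and $|a_i|,|b_i|<M^{\nu-i}$ for all $i=0,\ldots,\nu-1$ (for which these coefficients are defined). Then $$|\mathrm{Res}(P_1,P_2)|\ll M^{\nu^2-1},$$ where the implied constant depends only on $\nu$.
   Context: $\mathrm{Res}(P_1,P_2)$ denotes the resultant, i.e. the determinant of the $(n+m-2)\times(n+m-2)$ Sylvester matrix whose first $m-1$ rows are the shifted coefficient rows $(a_{n-1},\ldots,a_1,a_0)$ of $P_1$ and whose last $n-1$ rows are the shifted coefficient rows $(b_{m-1},\ldots,b_1,b_0)$ of $P_2$. *)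

(* Defs.v *)
From HB Require Import structures.
From mathcomp Require Import all_boot all_order all_algebra.
From mathcomp Require Import complex.
From mathcomp Require Import reals.
Set Implicit Arguments. Unset Strict Implicit. Unset Printing Implicit Defensive.

(* Main.v *)
Require Import Defs.
From HB Require Import structures.
From mathcomp Require Import all_boot all_order all_algebra.
From mathcomp Require Import complex.
From mathcomp Require Import reals.
From mathcomp Require Import perm zify.
Import Order.TTheory GRing.Theory Num.Theory.
Local Open Scope ring_scope.
Lemma det_bound (C : numDomainType) N (A : 'M[C]_N) (c : C) (w v : 'I_N -> nat) :
  1 <= c -> (forall i j, `|A i j| * c ^+ (v j) <= c ^+ (w i)) ->
  `|\det A| * c ^+ (\sum_j v j) <= N`!%:R * c ^+ (\sum_i w i).
Proof.
move=> c1 H.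
have c0 : 0 <= c by apply: le_trans c1.
rewrite /determinant.
apply: le_trans (ler_wpM2r (exprn_ge0 _ c0) (ler_norm_sum _ _ _)) _.
rewrite mulr_suml.
have -> : N`!%:R * c ^+ (\sum_i w i) = \sum_(s : 'S_N) c ^+ (\sum_i w i).
  by rewrite sumr_const card_Sn mulr_natl.
apply: ler_sum => s _.
rewrite normrM normrX normrN normr1 expr1n mul1r normr_prod.
rewrite [X in _ * c ^+ X](reindex_inj (@perm_inj _ s)) /= !(big_morph _ (exprD c) (expr0 c)) -big_split /=.
apply: ler_prod => i _; rewrite mulr_ge0 ?exprn_ge0 //=.


Qed.

Lemma sum_ord_add (a b : nat) :
  (\sum_(i < a + b) (i : nat) = \sum_(i < a) (i : nat) + \sum_(i < b) (i : nat) + b * a)%N.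
Proof.
rewrite big_split_ord /= big_split /= sum_nat_const card_ord; lia.
Qed.

Lemma arith (nu p q : nat) : (1 <= p < nu)%N -> (1 <= q < nu)%N ->
  (q * p <= nu * (q + p) /\ nu * (q + p) - q * p <= nu ^ 2 - 1)%N.
Proof.
move=> /andP[p1 pn] /andP[q1 qn].
have [a Ha] : exists a, (nu = p + a.+1)%N by exists (nu - p).-1%N; lia.
have [b Hb] : exists b, (nu = q + b.+1)%N by exists (nu - q).-1%N; lia.
have E1 : (nu * (q + p) = q * p + a.+1 * q + p * b.+1 + q * p)%N.
  rewrite mulnDr; have -> : (nu * q = (p + a.+1) * q)%N by rewrite -Ha.
  have -> : (nu * p = (q + b.+1) * p)%N by rewrite -Hb. nia.
have E2 : (nu ^ 2 = q * p + p * b.+1 + a.+1 * q + a.+1 * b.+1)%N.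
  have -> : (nu ^ 2 = (p + a.+1) * (q + b.+1))%N by rewrite -Ha -Hb expnS expn1.
  nia.
rewrite E1 E2; have : (1 <= a.+1 * b.+1)%N by rewrite muln_gt0.
lia.
Qed.

Lemma entry_bound (C : numDomainType) (c : C) nu n (a : nat -> C) (j k : nat) :
  1 <= c -> (n <= nu)%N -> (forall i, (i < n)%N -> `|a i| < c ^+ (nu - i)) ->
  `|(\poly_(i < n) a i)`_(j - k) *+ (k <= j)| * c ^+ j <= c ^+ (nu + k).
Proof.
move=> c1 nn Ha.
have c0 : 0 <= c by apply: le_trans c1.
case: (leqP k j) => kj; last by rewrite mulr0n normr0 mul0r exprn_ge0.
rewrite mulr1n coef_poly; case: ltnP => h; last by rewrite normr0 mul0r exprn_ge0.
apply: le_trans (ler_wpM2r (exprn_ge0 _ c0) (ltW (Ha _ h))) _.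
rewrite -exprD; apply: ler_weXn2l => //; lia.
Qed.

Lemma sum_split_w (nu a b : nat) :
  (\sum_(i < a + b) (nu + match split i with inl k => (k : nat) | inr k => (k : nat) end)
   = nu * (a + b) + \sum_(k < a) (k : nat) + \sum_(k < b) (k : nat))%N.
Proof.
rewrite big_split_ord /=.
rewrite (eq_bigr (fun k : 'I_a => nu + k)%N); last by move=> k _; rewrite (unsplitK (inl k)).
rewrite [X in (_ + X)%N](eq_bigr (fun k : 'I_b => nu + k)%N); last by move=> k _; rewrite (unsplitK (inr k)).
rewrite !big_split /= !sum_nat_const !card_ord; lia.
Qed.

Local Open Scope complex_scope.

Theorem corollary2p31 (nu : nat) (hnu : (2 <= nu)%N) :
  exists K : nat,
  forall (R : realType) (n m : nat) (M : R) (a b : nat -> R[i]),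
    (2 <= n <= nu)%N -> (2 <= m <= nu)%N -> 1 <= M ->
    a n.-1 != 0 -> b m.-1 != 0 ->
    (forall i : nat, (i < n)%N -> `|a i| < (M ^+ (nu - i))%:C) ->
    (forall i : nat, (i < m)%N -> `|b i| < (M ^+ (nu - i))%:C) ->
    `|resultant (\poly_(i < n) a i) (\poly_(i < m) b i)|
      <= K%:R * (M ^+ (nu ^ 2 - 1))%:C.
Proof.
exists (nu + nu)`!.
move=> R n m M a b /andP[n2 nn] /andP[m2 mn] M1 an bm Ha Hb.
set c : R[i] := M%:C.
have c1 : 1 <= c by rewrite /c -lecR in M1.
have c0 : 0 < c by apply: lt_le_trans c1.
rewrite rmorphXn /= -/c.
set P1 := \poly_(i < n) a i. set P2 := \poly_(i < m) b i.
have s1 : size P1 = n by apply: size_poly_eq.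
have s2 : size P2 = m by apply: size_poly_eq.
pose w (i : 'I_((size P2).-1 + (size P1).-1)) : nat :=
  (nu + match split i with inl k => (k : nat) | inr k => (k : nat) end)%N.
have entry : forall i j, `|Sylvester_mx P1 P2 i j| * c ^+ (j : nat) <= c ^+ (w i).
  move=> i j; rewrite Sylvester_mxE /w.
  have Ha' : forall i, (i < n)%N -> `|a i| < c ^+ (nu - i) by move=> t /Ha; rewrite rmorphXn.
  have Hb' : forall i, (i < m)%N -> `|b i| < c ^+ (nu - i) by move=> t /Hb; rewrite rmorphXn.
  by case: (split i) => k; apply: entry_bound.
have := @det_bound _ _ (Sylvester_mx P1 P2) c w (fun j => j : nat) c1 entry.
set q' := (size P2).-1; set p' := (size P1).-1.
have L : forall k : 'I_q', split (lshift p' k) = inl k := fun k => unsplitK (inl k).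
have L2 : forall k : 'I_p', split (rshift q' k) = inr k := fun k => unsplitK (inr k).
have Sw : (\sum_i w i = nu * (q' + p') + \sum_(k < q') (k : nat) + \sum_(k < p') (k : nat))%N.
  exact: sum_split_w.
have Sv := sum_ord_add q' p'.
have [le1 le2] : (q' * p' <= nu * (q' + p') /\ nu * (q' + p') - q' * p' <= nu ^ 2 - 1)%N.
  by apply: arith; rewrite /q' /p' ?s1 ?s2; lia.
have -> : (\sum_i w i = \sum_(j < q' + p') (j : nat) + (nu * (q' + p') - q' * p'))%N.
  by rewrite Sw Sv; lia.
rewrite exprD mulrA mulrAC ler_pM2r ?exprn_gt0 // => H.
rewrite /resultant; apply: le_trans H _.
apply: ler_pM; rewrite ?ler0n ?exprn_ge0 ?(ltW c0) //.
  by rewrite ler_nat; apply: leq_fact; rewrite /q' /p' ?s1 ?s2; lia.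
by apply: ler_weXn2l.
Qed.
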